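(* Let $q\ge0$. For every $X\in\mathcal{X}_{k,q+1}$, \[ \|X(T)\|_H^2+\sum_{i=0}^{N-1}\int_{I_i}\big\|A^{\frac12}\Pi_i^{(q)}X(s)-A^{-\frac12}\dot X(s)\big\|_H^2\,\mathrm{d}s=|X|_{\mathcal{X}_{k,q+1}}^2 , \] where \[ |X|_{\mathcal{X}_{k,q+1}}^2=\|X(0)\|_H^2+\sum_{i=0}^{N-1}\int_{I_i}\Big(\|A^{\frac12}\Pi_i^{(q)}X\|_H^2+\|A^{-\frac12}\dot X\|_H^2\Big)\,\mathrm{d}s . \]
   Context: Let $V\hookrightarrow H\hookrightarrow V^*$ be a Gelfand triple of real separable Hilbert spaces, with $V$ densely embedded in $H$. Let $A:V\to V^*$ be the operator associated with a symmetric, bounded, coercive bilinear form on $V$, with fractional powers defined as usual. For $\gamma\in\mathbb{R}$, $\dot H^\gamma=D(A^{\gamma/2})$ with norm $\|A^{\gamma/2}\cdot\|_H$, so $\dot H^1=V$ and $\dot H^{-1}=V^*$ with equivalent norms. Let $0=t_0<t_1<\dots<t_N=T$, $I_i=[t_i,t_{i+1}]$. Let $\mathcal{X}_{k,q+1}$ be the set of $X\in L^2((0,T);V)\cap H^1((0,T);V^* )$ (hence continuous into $H$) whose restriction to each $I_i$ is a polynomial in $t$ of degree at most $q+1$ with coefficients in $\dot H^1$. On $I_i$, $\Pi_i^{(q)}$ denotes the $L^2(I_i)$-orthogonal projection onto polynomials in $t$ of degree at most $q$. *)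

(* Defs.v *)
From HB Require Import structures.
From mathcomp Require Import all_boot all_order all_algebra.
From mathcomp Require Import all_classical all_reals all_analysis.
Set Implicit Arguments. Unset Strict Implicit. Unset Printing Implicit Defensive.
Import Order.TTheory GRing.Theory Num.Theory.
Local Open Scope classical_set_scope.
Local Open Scope ring_scope.

Section Defs.
Variables (R : realType) (H : lmodType R).

Definition inner_product (ip : H -> H -> R) : Prop :=
  [/\ (forall x y, ip x y = ip y x),
      (forall (a : R) x y z, ip (a *: x + y) z = a * ip x z + ip y z),
      (forall x, 0 <= ip x x) &
      (forall x, ip x x = 0 -> x = 0)].

Definition subspace (D : set H) : Prop :=
  D 0 /\ (forall (a : R) x y, D x -> D y -> D (a *: x + y)).

Definition inner_product_on (D : set H) (ip : H -> H -> R) : Prop :=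
  [/\ (forall x y, D x -> D y -> ip x y = ip y x),
      (forall (a : R) x y z, D x -> D y -> D z ->
          ip (a *: x + y) z = a * ip x z + ip y z),
      (forall x, D x -> 0 <= ip x x) &
      (forall x, D x -> ip x x = 0 -> x = 0)].

Definition complete_on (D : set H) (ip : H -> H -> R) : Prop :=
  forall u : nat -> H, (forall n, D (u n)) ->
    (forall e : R, 0 < e -> exists n0, forall m n, (n0 <= m)%N -> (n0 <= n)%N ->
        ip (u m - u n) (u m - u n) < e) ->
    exists l, D l /\ forall e : R, 0 < e -> exists n0, forall n, (n0 <= n)%N ->
        ip (u n - l) (u n - l) < e.

Definition separable_on (D : set H) (ip : H -> H -> R) : Prop :=
  exists u : nat -> H, (forall n, D (u n)) /\
    forall x, D x -> forall e : R, 0 < e -> exists n, ip (x - u n) (x - u n) < e.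

(* Gelfand triple V -> H -> V^* of real separable Hilbert spaces, V a dense
   subspace of H, continuously embedded; a is a symmetric bounded coercive
   bilinear form on V. *)
Definition gelfand_form (ip : H -> H -> R) (V : set H) (ipV : H -> H -> R)
  (a : H -> H -> R) : Prop :=
  [/\ [/\ inner_product ip, complete_on setT ip & separable_on setT ip],
      subspace V,
      [/\ inner_product_on V ipV, complete_on V ipV, separable_on V ipV,
          (forall x e, 0 < e -> exists v, V v /\ ip (x - v) (x - v) < e) &
          (exists C : R, 0 < C /\ forall v, V v -> ip v v <= C * ipV v v)] &
      [/\ (forall u v, V u -> V v -> a u v = a v u),
          (forall (c : R) u v w, V u -> V v -> V w ->
              a (c *: u + v) w = c * a u w + a v w),
          (exists M : R, 0 < M /\ forall u v, V u -> V v ->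
              `|a u v| <= M * Num.sqrt (ipV u u) * Num.sqrt (ipV v v)) &
          (exists al : R, 0 < al /\ forall v, V v -> al * ipV v v <= a v v)]].

(* S is A^{1/2}: the nonnegative self-adjoint square root of the operator A
   associated with a, i.e. the linear operator with domain V that is
   symmetric, nonnegative, onto H (hence self-adjoint) and satisfies
   (S u, S v)_H = a(u, v) on V.  Values of S outside V are irrelevant. *)
Definition is_sqrtA (ip : H -> H -> R) (V : set H) (a : H -> H -> R)
  (S : H -> H) : Prop :=
  [/\ (forall (c : R) u v, V u -> V v -> S (c *: u + v) = c *: S u + S v),
      (forall u v, V u -> V v -> ip (S u) (S v) = a u v),
      (forall u v, V u -> V v -> ip (S u) v = ip u (S v)),
      (forall u, V u -> 0 <= ip (S u) u) &
      (forall h, exists u, V u /\ S u = h)].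

Definition is_invsqrtA (V : set H) (S Si : H -> H) : Prop :=
  forall h, V (Si h) /\ S (Si h) = h.

Definition poly_eval (c : nat -> H) (n : nat) (s : R) : H :=
  \sum_(j < n) (s ^+ j) *: c j.

Definition poly_deriv (c : nat -> H) (n : nat) (s : R) : H :=
  \sum_(j < n) ((j%:R : R) * s ^+ j.-1) *: c j.

Definition integral_ab (a b : R) (f : R -> R) : R :=
  Rintegral (@lebesgue_measure R) `[a, b] f.

(* p (coefficients p 0..q) is the L^2(a,b;H)-orthogonal projection of X onto
   the polynomials of degree <= q with coefficients in H *)
Definition is_L2proj (ip : H -> H -> R) (a b : R) (q : nat) (X : R -> H)
  (p : nat -> H) : Prop :=
  forall (k : nat) (w : H), (k <= q)%N ->
    integral_ab a b (fun s => ip (X s - poly_eval p q.+1 s) w * s ^+ k) = 0.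

End Defs.

(* Main.v *)
Require Import Defs.
From HB Require Import structures.
From mathcomp Require Import all_boot all_order all_algebra.
From mathcomp Require Import all_classical all_reals all_analysis.
From mathcomp Require Import ring lra.
Import Order.TTheory GRing.Theory Num.Theory.
Import numFieldTopology.Exports numFieldNormedType.Exports.
Local Open Scope classical_set_scope.
Local Open Scope ring_scope.

Set Implicit Arguments.
Section IP.
Variables (R : realType) (H : lmodType R) (ip : H -> H -> R).
Hypothesis hip : inner_product ip.

Lemma ip_sym x y : ip x y = ip y x.
Proof. by case: hip. Qed.
Lemma ip_lin a x y z : ip (a *: x + y) z = a * ip x z + ip y z.
Proof. by case: hip. Qed.
Lemma ip0l z : ip 0 z = 0.
Proof.
have := ip_lin 1 0 0 z; rewrite scaler0 addr0 mul1r => /eqP.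
by rewrite -subr_eq0 opprD addrA subrr sub0r oppr_eq0 => /eqP.
Qed.
Lemma ipDl x y z : ip (x + y) z = ip x z + ip y z.
Proof. by rewrite -[x]scale1r ip_lin mul1r scale1r. Qed.
Lemma ipZl a x z : ip (a *: x) z = a * ip x z.
Proof. by rewrite -[a *: x]addr0 ip_lin ip0l addr0. Qed.
Lemma ipNl x z : ip (- x) z = - ip x z.
Proof. by rewrite -scaleN1r ipZl mulN1r. Qed.
Lemma ipBl x y z : ip (x - y) z = ip x z - ip y z.
Proof. by rewrite ipDl ipNl. Qed.
Lemma ipDr x y z : ip z (x + y) = ip z x + ip z y.
Proof. by rewrite ip_sym ipDl !(ip_sym z). Qed.
Lemma ipBr x y z : ip z (x - y) = ip z x - ip z y.
Proof. by rewrite ip_sym ipBl !(ip_sym z). Qed.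
Lemma ipZr a x z : ip z (a *: x) = a * ip z x.
Proof. by rewrite ip_sym ipZl ip_sym. Qed.

Lemma ip_suml n (al : nat -> R) (u : nat -> H) z :
  ip (\sum_(j < n) al j *: u j) z = \sum_(j < n) al j * ip (u j) z.
Proof.
elim: n => [|n IH]; first by rewrite !big_ord0 ip0l.
by rewrite !big_ord_recr /= ipDl IH ipZl.
Qed.
Lemma ip_sumr n (al : nat -> R) (u : nat -> H) z :
  ip z (\sum_(j < n) al j *: u j) = \sum_(j < n) al j * ip z (u j).
Proof.
rewrite ip_sym ip_suml; apply: eq_bigr => j _; by rewrite ip_sym.
Qed.
Lemma ip_sum2 n m (al be : nat -> R) (u w : nat -> H) :
  ip (\sum_(j < n) al j *: u j) (\sum_(k < m) be k *: w k) =
  \sum_(j < n) \sum_(k < m) al j * be k * ip (u j) (w k).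
Proof.
rewrite ip_suml; apply: eq_bigr => j _; rewrite ip_sumr mulr_sumr.
by apply: eq_bigr => k _; rewrite mulrA.
Qed.
Lemma ip_sq x y : ip (x - y) (x - y) = ip x x + ip y y - 2 * ip x y.
Proof.
rewrite ipBl !ipBr (ip_sym y x); lra.
Qed.
End IP.

Section Lin.
Variables (R : realType) (H : lmodType R) (V : set H) (L : H -> H).
Hypothesis hV : Defs.subspace V.
Hypothesis hL : forall (c : R) u v, V u -> V v -> L (c *: u + v) = c *: L u + L v.

Lemma lin_sum n (al : nat -> R) (u : nat -> H) :
  (forall j, (j < n)%N -> V (u j)) ->
  V (\sum_(j < n) al j *: u j) /\
  L (\sum_(j < n) al j *: u j) = \sum_(j < n) al j *: L (u j).
Proof.
move: (hV) => -[V0 Vlin].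
have L0 : L 0 = 0.
  have := @hL 1 0 0 V0 V0; rewrite scaler0 addr0 scale1r => /eqP.
  by rewrite -subr_eq0 opprD addrA subrr sub0r oppr_eq0 => /eqP.
elim: n => [|n IH] hu; first by rewrite !big_ord0.
have [IH1 IH2] := IH (fun j hj => hu j (ltnW hj)).
rewrite !big_ord_recr /= [X in _ /\ L X = _]addrC addrC.
have Vn : V (u n) := hu n (ltnSn n).
split; first by apply: Vlin.
by rewrite hL // IH2 addrC.
Qed.
End Lin.

Section Pol.
Variable R : realType.
Definition ispoly (f : R -> R) := exists p : {poly R}, forall s, f s = p.[s].
Implicit Types (a b r : R) (f g : R -> R).

Lemma ispoly_cst r : ispoly (fun _ => r).
Proof. by exists r%:P => s; rewrite hornerC. Qed.
Lemma ispoly_X k : ispoly (fun s => s ^+ k).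
Proof. by exists 'X^k => s; rewrite hornerXn. Qed.
Lemma ispolyD f g : ispoly f -> ispoly g -> ispoly (fun s => f s + g s).
Proof. by move=> [p hp] [q hq]; exists (p + q) => s; rewrite hornerD hp hq. Qed.
Lemma ispolyB f g : ispoly f -> ispoly g -> ispoly (fun s => f s - g s).
Proof. by move=> [p hp] [q hq]; exists (p - q) => s; rewrite hornerD hornerN hp hq. Qed.
Lemma ispolyM f g : ispoly f -> ispoly g -> ispoly (fun s => f s * g s).
Proof. by move=> [p hp] [q hq]; exists (p * q) => s; rewrite hornerM hp hq. Qed.
Lemma ispoly_ext g f : ispoly g -> (forall s, f s = g s) -> ispoly f.
Proof. by move=> [p hp] e; exists p => s; rewrite e hp. Qed.
Lemma ispoly_sum n (F : nat -> R -> R) : (forall j, ispoly (F j)) ->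
  ispoly (fun s => \sum_(j < n) F j s).
Proof.
move=> hF; elim: n => [|n IH].
  apply: (@ispoly_ext (fun _ => 0)); first exact: ispoly_cst. by move=> s; rewrite big_ord0.
apply: (@ispoly_ext (fun s => \sum_(j < n) F j s + F n s)); first exact: ispolyD.
by move=> s; rewrite big_ord_recr.
Qed.

Lemma ispoly_int a b f : ispoly f ->
  (@lebesgue_measure R).-integrable `[a, b] (EFin \o f).
Proof.
move=> [p hp]; have -> : f = horner p by apply/funext.
apply: continuous_compact_integrable; first exact: segment_compact.
apply: continuous_subspaceT; exact: continuous_horner.
Qed.

Lemma intD a b f g : ispoly f -> ispoly g ->
  integral_ab a b (fun s => f s + g s) = integral_ab a b f + integral_ab a b g.
Proof. by move=> hf hg; rewrite /integral_ab RintegralD //; apply: ispoly_int. Qed.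
Lemma intB a b f g : ispoly f -> ispoly g ->
  integral_ab a b (fun s => f s - g s) = integral_ab a b f - integral_ab a b g.
Proof. by move=> hf hg; rewrite /integral_ab RintegralB //; apply: ispoly_int. Qed.
Lemma intZ a b r f : ispoly f ->
  integral_ab a b (fun s => r * f s) = r * integral_ab a b f.
Proof. by move=> hf; rewrite /integral_ab RintegralZl //; apply: ispoly_int. Qed.
Lemma int_ext a b f g : (forall s, a <= s <= b -> f s = g s) ->
  integral_ab a b f = integral_ab a b g.
Proof.
move=> e; rewrite /integral_ab; apply: eq_Rintegral => s.
rewrite inE /= in_itv /=; exact: e.
Qed.
Lemma int_sum0 a b n (F : nat -> R -> R) : (forall j, ispoly (F j)) ->
  (forall j, (j < n)%N -> integral_ab a b (F j) = 0) ->
  integral_ab a b (fun s => \sum_(j < n) F j s) = 0.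
Proof.
move=> hF; elim: n => [|n IH] h0.
  rewrite (@int_ext _ _ _ (fun s => 0 * 0)); last by move=> s _; rewrite big_ord0 mulr0.
  by rewrite intZ ?mul0r //; exact: ispoly_cst.
rewrite (@int_ext _ _ _ (fun s => \sum_(j < n) F j s + F n s)); last first.
  by move=> s _; rewrite big_ord_recr.
rewrite intD ?IH ?h0 ?addr0 //; last exact: ispoly_sum.
by move=> j hj; apply: h0; exact: ltnW.
Qed.

Lemma int_ftc a b (p : {poly R}) : a < b ->
  integral_ab a b (horner p^`()) = p.[b] - p.[a].
Proof.
move=> ab; rewrite /integral_ab /Rintegral.
rewrite (@continuous_FTC2 R (horner p^`()) (horner p) a b ab).
- by [].
- apply: continuous_subspaceT; exact: continuous_horner.
- split.
  + by move=> x _; exact: derivable_horner.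
  + apply: cvg_at_right_filter; exact: continuous_horner.
  + apply: cvg_at_left_filter; exact: continuous_horner.
- by move=> x _; rewrite derivE.
Qed.
End Pol.
Arguments ispoly {R}.
Arguments ispoly_ext {R g f}.

Unset Implicit Arguments.

Section Interval.
Variables (R : realType) (H : lmodType R) (ip : H -> H -> R) (V : set H)
  (Ah Amh : H -> H).
Hypothesis hip : inner_product ip.
Hypothesis hV : Defs.subspace V.
Hypothesis hAlin : forall (c : R) u v, V u -> V v -> Ah (c *: u + v) = c *: Ah u + Ah v.
Hypothesis hAsym : forall u v, V u -> V v -> ip (Ah u) v = ip u (Ah v).
Hypothesis hSi : forall h, V (Amh h) /\ Ah (Amh h) = h.
Hypothesis hAmlin : forall (c : R) u v, Amh (c *: u + v) = c *: Amh u + Amh v.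

Lemma ispoly_ip2 (n m : nat) (al be : nat -> R -> R) (u w : nat -> H) :
  (forall j, ispoly (al j)) -> (forall k, ispoly (be k)) ->
  ispoly (fun s => ip (\sum_(j < n) al j s *: u j) (\sum_(k < m) be k s *: w k)).
Proof.
move=> ha hb.
have h : ispoly (fun s => \sum_(j < n) \sum_(k < m) al j s * be k s * ip (u j) (w k)).
  apply: (@ispoly_sum _ n (fun j s => \sum_(k < m) al j s * be k s * ip (u j) (w k))) => j.
  apply: (@ispoly_sum _ m (fun k s => al j s * be k s * ip (u j) (w k))) => k.
  apply: ispolyM; [exact: ispolyM | exact: ispoly_cst].
apply: (ispoly_ext h) => s; by rewrite (ip_sum2 hip n m (fun j => al j s) (fun k => be k s)).
Qed.

Lemma ispoly_pw j : ispoly (fun s : R => s ^+ j).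
Proof. exact: ispoly_X. Qed.
Lemma ispoly_dw j : ispoly (fun s : R => j%:R * s ^+ j.-1).
Proof. apply: ispolyM; [exact: ispoly_cst | exact: ispoly_X]. Qed.

Lemma subT : Defs.subspace (@setT H).
Proof. by split. Qed.


Definition Qp (cc : nat -> H) (n : nat) : {poly R} :=
  \sum_(j < n) \sum_(k < n) (ip (cc j) (cc k))%:P * ('X^j * 'X^k).

Lemma Qp_eval cc n s : (Qp cc n).[s] = ip (poly_eval cc n s) (poly_eval cc n s).
Proof.
rewrite /Qp /poly_eval (ip_sum2 hip n n (fun j => s ^+ j) (fun j => s ^+ j)) horner_sum; apply: eq_bigr => j _.
rewrite horner_sum; apply: eq_bigr => k _.
by rewrite !hornerM hornerC !hornerXn mulrC.
Qed.

Lemma hderiv_sum n (F : nat -> {poly R}) s :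
  (\sum_(j < n) F j)^`().[s] = \sum_(j < n) (F j)^`().[s].
Proof.
elim: n => [|n IH]; first by rewrite !big_ord0 deriv0 horner0.
by rewrite !big_ord_recr derivD hornerD IH.
Qed.

Lemma Qp_deriv cc n s :
  (Qp cc n)^`().[s] = 2 * ip (poly_eval cc n s) (poly_deriv cc n s).
Proof.
rewrite /poly_eval /poly_deriv (ip_sum2 hip n n (fun j => s ^+ j) (fun j => j%:R * s ^+ j.-1)).
transitivity (\sum_(j < n) \sum_(k < n)
   ((ip (cc j) (cc k))%:P * ('X^j * 'X^k))^`().[s]).
  rewrite /Qp; rewrite (hderiv_sum n (fun j => \sum_(k < n) (ip (cc j) (cc k))%:P * ('X^j * 'X^k))).
  apply: eq_bigr => j _; exact: (hderiv_sum n (fun k => (ip (cc j) (cc k))%:P * ('X^j * 'X^k))).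

under eq_bigr => j _ do under eq_bigr => k _ do
  rewrite derivM derivC mul0r add0r derivM !derivXn !hornerM hornerC hornerD !hornerM !hornerMn !hornerXn mulrDr.
under eq_bigr => j _ do rewrite big_split /=.
rewrite big_split /= exchange_big /=.
have -> : forall x : R, 2 * x = x + x by move=> x; ring.
congr (_ + _); apply: eq_bigr => j _; apply: eq_bigr => k _.
  by rewrite (ip_sym hip) -[s ^+ k.-1 *+ k]mulr_natl; ring.
by rewrite -[s ^+ k.-1 *+ k]mulr_natl; ring.
Qed.

Lemma interval_id (a b : R) (q : nat) (X : R -> H) (cc PP : nat -> H) :
  a < b ->
  (forall j, (j <= q)%N -> V (PP j)) ->
  (forall s, a <= s <= b -> X s = poly_eval cc q.+2 s) ->
  is_L2proj ip a b q X PP ->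
  integral_ab a b (fun s =>
        ip (Ah (poly_eval PP q.+1 s) - Amh (poly_deriv cc q.+2 s))
           (Ah (poly_eval PP q.+1 s) - Amh (poly_deriv cc q.+2 s)))
  = integral_ab a b (fun s =>
        ip (Ah (poly_eval PP q.+1 s)) (Ah (poly_eval PP q.+1 s))
      + ip (Amh (poly_deriv cc q.+2 s)) (Amh (poly_deriv cc q.+2 s)))
    - (ip (X b) (X b) - ip (X a) (X a)).
Proof.
move=> ab hPV hX hP.
pose pP s := poly_eval PP q.+1 s.
pose xd s := poly_deriv cc q.+2 s.
pose x s := poly_eval cc q.+2 s.
have eA s : V (pP s) /\ Ah (pP s) = \sum_(j < q.+1) s ^+ j *: Ah (PP j).
  by apply: (lin_sum Ah hV hAlin q.+1 (fun j => s ^+ j) PP) => j hj; apply: hPV.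
have eM s : Amh (xd s) = \sum_(j < q.+2) (j%:R * s ^+ j.-1) *: Amh (cc j).
  by have [_ ->] := lin_sum Amh subT (fun c u v _ _ => hAmlin c u v) q.+2 (fun j => j%:R * s ^+ j.-1) cc (fun j _ => Logic.I).
have pF1 : ispoly (fun s => ip (Ah (pP s)) (Ah (pP s))).
  apply: (ispoly_ext (ispoly_ip2 q.+1 q.+1 (fun j s => s ^+ j) (fun j s => s ^+ j)
     (fun j => Ah (PP j)) (fun j => Ah (PP j)) ispoly_pw ispoly_pw)) => s.
  by have [_ ->] := eA s.
have pF2 : ispoly (fun s => ip (Amh (xd s)) (Amh (xd s))).
  apply: (ispoly_ext (ispoly_ip2 q.+2 q.+2 (fun j s => j%:R * s ^+ j.-1) (fun j s => j%:R * s ^+ j.-1)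
     (fun j => Amh (cc j)) (fun j => Amh (cc j)) ispoly_dw ispoly_dw)) => s.
  by rewrite eM.
have pG : ispoly (fun s => ip (Ah (pP s)) (Amh (xd s))).
  apply: (ispoly_ext (ispoly_ip2 q.+1 q.+2 (fun j s => s ^+ j) (fun j s => j%:R * s ^+ j.-1)
     (fun j => Ah (PP j)) (fun j => Amh (cc j)) ispoly_pw ispoly_dw)) => s.
  by rewrite eM; have [_ ->] := eA s.
have pQ : ispoly (horner (Qp cc q.+2)^`()) by exists (Qp cc q.+2)^`().
have he j : ispoly (fun s => ip (x s - pP s) (cc j)).
  have h1 : ispoly (fun s => \sum_(k < q.+2) s ^+ k * ip (cc k) (cc j)).
    apply: (ispoly_sum q.+2 (fun k s => s ^+ k * ip (cc k) (cc j))) => k.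
    apply: ispolyM; [exact: ispoly_X | exact: ispoly_cst].
  have h2 : ispoly (fun s => \sum_(k < q.+1) s ^+ k * ip (PP k) (cc j)).
    apply: (ispoly_sum q.+1 (fun k s => s ^+ k * ip (PP k) (cc j))) => k.
    apply: ispolyM; [exact: ispoly_X | exact: ispoly_cst].
  apply: (ispoly_ext (ispolyB h1 h2)) => s.
  by rewrite (ipBl hip) /x /pP /poly_eval (ip_suml hip q.+2 (fun k => s ^+ k)) (ip_suml hip q.+1 (fun k => s ^+ k)).
pose F j s := (j%:R * s ^+ j.-1) * ip (x s - pP s) (cc j).
have pFj j : ispoly (F j) by apply: ispolyM; [exact: ispoly_dw | exact: he].
have eE s : ip (x s - pP s) (xd s) = \sum_(j < q.+2) F j s.
  by rewrite /xd /poly_deriv (ip_sumr hip q.+2 (fun j => j%:R * s ^+ j.-1)).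
have pE : ispoly (fun s => ip (x s - pP s) (xd s)).
  apply: (ispoly_ext (ispoly_sum q.+2 F pFj)) => s; exact: eE.
have intE : integral_ab a b (fun s => ip (x s - pP s) (xd s)) = 0.
  rewrite (int_ext _ _ _ _ (fun s => \sum_(j < q.+2) F j s)); last by move=> s _; exact: eE.
  apply: int_sum0 => // j hj.
  rewrite (int_ext _ _ _ _ (fun s => j%:R * (ip (x s - pP s) (cc j) * s ^+ j.-1))); last first.
    by move=> s _; rewrite /F; ring.
  rewrite intZ; last exact: (ispolyM (he j) (ispoly_X _ j.-1)).
  rewrite (int_ext _ _ _ _ (fun s => ip (X s - poly_eval PP q.+1 s) (cc j) * s ^+ j.-1)); last first.
    by move=> s hs; rewrite hX.
  by rewrite hP ?mulr0 //; rewrite -ltnS; case: j hj.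
have eD s : ip (Ah (pP s) - Amh (xd s)) (Ah (pP s) - Amh (xd s)) =
   (ip (Ah (pP s)) (Ah (pP s)) + ip (Amh (xd s)) (Amh (xd s)))
   - ((Qp cc q.+2)^`().[s] - 2 * ip (x s - pP s) (xd s)).
  rewrite (ip_sq hip) Qp_deriv (ipBl hip).
  have [VP _] := eA s; have [VM AM] := hSi (xd s).
  rewrite (hAsym _ _ VP VM) AM -/(x s) -/(xd s); ring.
rewrite (int_ext _ _ _ _ (fun s => (ip (Ah (pP s)) (Ah (pP s)) + ip (Amh (xd s)) (Amh (xd s)))
   - ((Qp cc q.+2)^`().[s] - 2 * ip (x s - pP s) (xd s)))); last by move=> s _; exact: eD.
rewrite intB; last 2 first.
- exact: ispolyD.
- apply: ispolyB => //; apply: (ispolyM (ispoly_cst _ 2)) => //.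
rewrite intB //; last by apply: (ispolyM (ispoly_cst _ 2)).
rewrite intZ // intE mulr0 subr0 int_ftc // !Qp_eval.
rewrite -!hX //; last 2 first.
- by rewrite lexx (ltW ab).
- by rewrite lexx (ltW ab).
Qed.

End Interval.

Theorem lemma5p1 (R : realType) (H : lmodType R)
  (ip : H -> H -> R) (V : set H) (ipV : H -> H -> R) (a : H -> H -> R)
  (Ah Amh : H -> H)
  (hG : gelfand_form ip V ipV a) (hS : is_sqrtA ip V a Ah)
  (hSi : is_invsqrtA V Ah Amh)
  (N : nat) (t : nat -> R) (T : R)
  (ht0 : t 0%N = 0) (htN : t N = T)
  (hmono : forall i, (i < N)%N -> t i < t i.+1)
  (q : nat)
  (X : R -> H) (c : nat -> nat -> H)
  (hcV : forall i j, (i < N)%N -> (j <= q.+1)%N -> V (c i j))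
  (hX : forall i s, (i < N)%N -> t i <= s <= t i.+1 ->
          X s = poly_eval (c i) q.+2 s)
  (P : nat -> nat -> H)
  (hPV : forall i j, (i < N)%N -> (j <= q)%N -> V (P i j))
  (hP : forall i, (i < N)%N -> is_L2proj ip (t i) (t i.+1) q X (P i)) :
  ip (X T) (X T)
  + \sum_(i < N) integral_ab (t i) (t i.+1) (fun s =>
        ip (Ah (poly_eval (P i) q.+1 s) - Amh (poly_deriv (c i) q.+2 s))
           (Ah (poly_eval (P i) q.+1 s) - Amh (poly_deriv (c i) q.+2 s)))
  = ip (X 0) (X 0)
  + \sum_(i < N) integral_ab (t i) (t i.+1) (fun s =>
        ip (Ah (poly_eval (P i) q.+1 s)) (Ah (poly_eval (P i) q.+1 s))
      + ip (Amh (poly_deriv (c i) q.+2 s)) (Amh (poly_deriv (c i) q.+2 s))).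
Proof.
case: (hG) => [[hip _ _] hV [hipV _ _ _ _] [_ _ _ [al [al0 hco]]]].
case: (hS) => [hAlin hAa hAsym _ _].
case: hipV => [_ _ hipV0 hipVd].
have hSi' : forall h, V (Amh h) /\ Ah (Amh h) = h := hSi.
move: (hV) => [V0 Vlin].
have hAmlin : forall (k : R) u v, Amh (k *: u + v) = k *: Amh u + Amh v.
  move=> k u v.
  have [VL AL] := hSi' (k *: u + v).
  have [Vu Au] := hSi' u; have [Vv Av] := hSi' v.
  have VR : V (k *: Amh u + Amh v) by apply: Vlin.
  have Vw : V ((-1) *: (k *: Amh u + Amh v) + Amh (k *: u + v)) by apply: Vlin.
  have Aw : Ah ((-1) *: (k *: Amh u + Amh v) + Amh (k *: u + v)) = 0.
    by rewrite hAlin // hAlin // Au Av AL scaleN1r addNr.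
  have aw := hAa _ _ Vw Vw; rewrite Aw (ip0l hip) in aw.
  have := hco _ Vw; rewrite -aw => h1.
  have h2 := hipV0 _ Vw.
  have h3 : ipV ((-1) *: (k *: Amh u + Amh v) + Amh (k *: u + v))
                ((-1) *: (k *: Amh u + Amh v) + Amh (k *: u + v)) = 0.
    apply/eqP; rewrite eq_le h2 andbT.
    by rewrite -(pmulr_rle0 _ al0).
  by move: (hipVd _ Vw h3) => /eqP; rewrite scaleN1r addrC subr_eq0 => /eqP.
have key i : (i < N)%N ->
  integral_ab (t i) (t i.+1) (fun s =>
        ip (Ah (poly_eval (P i) q.+1 s) - Amh (poly_deriv (c i) q.+2 s))
           (Ah (poly_eval (P i) q.+1 s) - Amh (poly_deriv (c i) q.+2 s)))
  = integral_ab (t i) (t i.+1) (fun s =>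
        ip (Ah (poly_eval (P i) q.+1 s)) (Ah (poly_eval (P i) q.+1 s))
      + ip (Amh (poly_deriv (c i) q.+2 s)) (Amh (poly_deriv (c i) q.+2 s)))
    - (ip (X (t i.+1)) (X (t i.+1)) - ip (X (t i)) (X (t i))).
  move=> hi.
  apply: (@interval_id R H ip V Ah Amh hip hV hAlin hAsym hSi' hAmlin).
  - exact: hmono.
  - by move=> j hj; apply: hPV.
  - by move=> s hs; apply: hX.
  - exact: hP.
under eq_bigr => i _ do rewrite (key i (ltn_ord i)).
rewrite sumrB.
have tel : \sum_(i < N) (ip (X (t i.+1)) (X (t i.+1)) - ip (X (t i)) (X (t i)))
   = ip (X T) (X T) - ip (X 0) (X 0).
  rewrite -(big_mkord xpredT (fun i => ip (X (t i.+1)) (X (t i.+1)) - ip (X (t i)) (X (t i)))).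
  by rewrite (telescope_sumr (fun i => ip (X (t i)) (X (t i)))) // htN ht0.
rewrite tel; ring.
Qed.
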